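(* The series $\Psi_0^+(x)=\tau([x])$ and $\Psi_0^-(x)=\tau(-[x])$ satisfy \[ \big(\beta D-S(R_+)\big)\Psi_0^+(x)=0,\qquad \big(\beta D+S(R_-)\big)\Psi_0^-(x)=0, \] where $S(R_\pm)=\sum_{k=1}^L ks_kR_\pm^k$.
   Context: Let $G(z)=1+\sum_{k=1}^Mg_kz^k$ be a polynomial, $\beta,\gamma$ formal parameters, ${\bf s}=(s_1,s_2,\dots)$ with only $s_1,\dots,s_L$ nonzero and $S(z)=\sum_{k=1}^Lks_kz^k$. For a partition $\lambda$ let $r_\lambda=\prod_{(i,j)\in\lambda}G((j-i)\beta)$ (boxes $(i,j)$, $i$ = row, $j$ = column), and $\tau({\bf t})=\sum_\lambda\gamma^{|\lambda|}r_\lambda s_\lambda({\bf t})s_\lambda(\beta^{-1}{\bf s})$, Schur functions being written in ${\bf t}=(t_1,t_2,\dots)$ with $p_i=it_i$, and $\beta^{-1}{\bf s}=(\beta^{-1}s_1,\dots)$. Here $[x]=(x,x^2/2,x^3/3,\dots)$. $D=x\,d/dx$, and $R_\pm=\gamma xG(\pm\beta D)$ acts on formal series in $x$ by $R_\pm(x^j)=\gamma G(\pm\beta j)x^{j+1}$. *)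

(* Defs.v *)
From HB Require Import structures.
From mathcomp Require Import all_boot all_order all_algebra.
Set Implicit Arguments. Unset Strict Implicit. Unset Printing Implicit Defensive.
Import Order.TTheory GRing.Theory Num.Theory.
Local Open Scope ring_scope.

Section Defs.
Variable K : fieldType.

Fixpoint seqs_upto (k n : nat) : seq (seq nat) :=
  match k with
  | 0 => [:: [::]]
  | k'.+1 => [::] :: [seq a :: l | a <- iota 1 n, l <- seqs_upto k' n]
  end.

Definition is_partition (n : nat) (l : seq nat) : bool :=
  [&& sorted geq l, all (fun a => 0 < a)%N l & sumn l == n].

Definition partitions (n : nat) : seq (seq nat) :=
  [seq l <- seqs_upto n n | is_partition n l].

(* t : nat -> {poly K}, with t i = t_i (t 0 is unused); p_i = i t_i.
   complete homogeneous h_k(t), defined by sum_k h_k z^k = exp(sum_i t_i z^i),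
   i.e. h_0 = 1 and k h_k = sum_{i=1}^k p_i h_{k-i}. *)
Fixpoint hseq (t : nat -> {poly K}) (k : nat) : seq {poly K} :=
  match k with
  | 0 => [:: 1]
  | k'.+1 =>
      let s := hseq t k' in
      rcons s ((k'.+1)%:R^-1 *:
                 \sum_(i < k'.+1) ((i.+1)%:R *: t i.+1) * nth 0 s (k' - i))
  end.

Definition hcomp (t : nat -> {poly K}) (m : int) : {poly K} :=
  match m with
  | Posz k => nth 0 (hseq t k) k
  | Negz _ => 0
  end.

(* Jacobi-Trudi: s_lambda(t) = det (h_{lambda_i - i + j}(t)) *)
Definition schur (t : nat -> {poly K}) (l : seq nat) : {poly K} :=
  \det (\matrix_(i < size l, j < size l)
          hcomp t ((nth 0 l i)%:Z - (i : nat)%:Z + (j : nat)%:Z)).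

(* Miwa variables [x] = (x, x^2/2, x^3/3, ...) as polynomials in x *)
Definition miwa (i : nat) : {poly K} := (i%:R)^-1 *: 'X^i.
Definition neg_miwa (i : nat) : {poly K} := - miwa i.

Definition Gfun (M : nat) (g : nat -> K) (z : K) : K :=
  1 + \sum_(1 <= k < M.+1) g k * z ^+ k.

Definition svec (L : nat) (s : nat -> K) (i : nat) : K :=
  if (0 < i <= L)%N then s i else 0.

(* beta^{-1} s as (constant) times *)
Definition tsb (beta : K) (L : nat) (s : nat -> K) (i : nat) : {poly K} :=
  (beta^-1 * svec L s i)%:P.

Definition rlam (M : nat) (g : nat -> K) (beta : K) (l : seq nat) : K :=
  \prod_(i < size l) \prod_(j < nth 0 l i)
     Gfun M g (((j : nat)%:R - (i : nat)%:R) * beta).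

(* tau(t) evaluated at t = tx, where tx is a homogeneous specialisation
   (s_lambda(tx) homogeneous of degree |lambda| in x): coefficient of x^n is
   sum over partitions of n. *)
Definition tau_at (M : nat) (g : nat -> K) (beta gamma : K) (L : nat)
  (s : nat -> K) (tx : nat -> {poly K}) (n : nat) : K :=
  \sum_(l <- partitions n)
     gamma ^+ n * rlam M g beta l * (schur tx l)`_n
       * (schur (tsb beta L s) l)`_0.

Definition Dop (f : nat -> K) (n : nat) : K := n%:R * f n.

(* R_pm = gamma x G(pm beta D) : x^j |-> gamma G(pm beta j) x^{j+1} *)
Definition Rop (M : nat) (g : nat -> K) (beta gamma : K) (sign : K)
  (f : nat -> K) (n : nat) : K :=
  match n with
  | 0 => 0
  | m.+1 => gamma * Gfun M g (sign * beta * m%:R) * f m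
  end.

Definition Sop (L : nat) (s : nat -> K) (R : (nat -> K) -> nat -> K)
  (f : nat -> K) (n : nat) : K :=
  \sum_(1 <= k < L.+1) k%:R * s k * iter k R f n.

End Defs.

(* Main.v *)
Require Import Defs.
From HB Require Import structures.
From mathcomp Require Import all_boot all_order all_algebra.
From mathcomp Require Import ring zify.
Import GRing.Theory Num.Theory.
Local Open Scope ring_scope.

Lemma size_hseq (K : fieldType) (t : nat -> {poly K}) k : size (hseq t k) = k.+1.
Proof. by elim: k => [|k IH] //=; rewrite size_rcons IH. Qed.

Lemma nth_hseq (K : fieldType) (t : nat -> {poly K}) k j : (j <= k)%N ->
  nth 0 (hseq t k) j = hcomp t (Posz j).
Proof.
elim: k => [|k IH]; first by rewrite leqn0 => /eqP ->.
rewrite leq_eqVlt => /orP [/eqP -> //| ltjk].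
by rewrite /= nth_rcons size_hseq ltjk IH.
Qed.

Lemma hcomp0 (K : fieldType) (t : nat -> {poly K}) : hcomp t 0 = 1.
Proof. by []. Qed.

Lemma hcompS (K : fieldType) (t : nat -> {poly K}) k :
  hcomp t (Posz k.+1) = (k.+1)%:R^-1 *:
     \sum_(i < k.+1) ((i.+1)%:R *: t i.+1) * hcomp t (Posz (k - i)).
Proof.
rewrite /hcomp /= nth_rcons size_hseq ltnn eqxx.
congr (_ *: _); apply: eq_bigr => i _; rewrite nth_hseq //.
exact: leq_subr.
Qed.

Lemma char0_neq0 (K : fieldType) (Kchar0 : [pchar K] =i pred0) n :
  (n.+1)%:R != 0 :> K.
Proof.
rewrite natf_neq0_pchar; apply/pnatP => // p pp _.
by have := Kchar0 p; rewrite !inE /= => ->.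
Qed.

Lemma hcompS' (K : fieldType) (Kchar0 : [pchar K] =i pred0)
  (t : nat -> {poly K}) k :
  (k.+1)%:R *: hcomp t (Posz k.+1) =
     \sum_(i < k.+1) ((i.+1)%:R *: t i.+1) * hcomp t (Posz (k - i)).
Proof.
by rewrite hcompS scalerA mulfV ?scale1r // char0_neq0.
Qed.

Lemma hcomp_miwa (K : fieldType) (Kchar0 : [pchar K] =i pred0) k :
  hcomp (@miwa K) (Posz k) = 'X^k.
Proof.
elim: k {-2}k (leqnn k) => [|k IH] m.
  by rewrite leqn0 => /eqP -> ; rewrite hcomp0 expr0.
rewrite leq_eqVlt => /orP [/eqP ->|]; last by apply: IH.
rewrite hcompS.
have -> : \sum_(i < k.+1) ((i.+1)%:R *: @miwa K i.+1) * hcomp (@miwa K) (Posz (k - i))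
   = \sum_(i < k.+1) ('X^(k.+1) : {poly K}).
  apply: eq_bigr => i _.
  rewrite (IH (k - i)%N (leq_subr _ _)) /miwa scalerA mulfV ?char0_neq0 // scale1r -exprD.
  by rewrite addSn subnKC // -ltnS.
by rewrite sumr_const card_ord -scaler_nat scalerA mulVf ?char0_neq0 // scale1r.
Qed.

Definition hneg (K : fieldType) (k : nat) : {poly K} :=
  match k with 0 => 1 | 1 => - 'X | _ => 0 end.

Lemma hcomp_neg (K : fieldType) (Kchar0 : [pchar K] =i pred0) k :
  hcomp (@neg_miwa K) (Posz k) = hneg K k.
Proof.
elim: k {-2}k (leqnn k) => [|k IH] m.
  by rewrite leqn0 => /eqP -> ; rewrite hcomp0.
rewrite leq_eqVlt => /orP [/eqP ->|]; last by apply: IH.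
rewrite hcompS.
have E : forall i : 'I_k.+1, ((i.+1)%:R *: @neg_miwa K i.+1) * hcomp (@neg_miwa K) (Posz (k - i))
   = - 'X^(i.+1) * hneg K (k - i).
  move=> i; rewrite (IH (k - i)%N (leq_subr _ _)) /neg_miwa /miwa scalerN scalerA.
  by rewrite mulfV ?char0_neq0 // scale1r.
rewrite (eq_bigr _ (fun i _ => E i)).
case: k IH E => [|k] IH E.
  by rewrite big_ord1 /= mulr1 invr1 scale1r expr1.
rewrite 2!big_ord_recr /= subnn subSnn big1; last first.
  move=> i _; rewrite subSn; last by rewrite ltnW.
  by case: (k - i)%N (subn_gt0 i k) => [|n]; [rewrite ltn_ord|] => //= _; rewrite mulr0.
rewrite add0r mulr1 mulrN mulNr opprK -exprSr.
by rewrite subrr scaler0.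
Qed.

Fixpoint useq {R : comNzRingType} (h : nat -> R) (m : nat) : seq R :=
  match m with
  | 0 => [:: 1]
  | m'.+1 => let s := useq h m' in
      rcons s (- \sum_(j < m'.+1) nth 0 s j * h (m'.+1 - j)%N)
  end.

Definition uu {R : comNzRingType} (h : nat -> R) m := nth 0 (useq h m) m.

Lemma size_useq (R : comNzRingType) (h : nat -> R) m : size (useq h m) = m.+1.
Proof. by elim: m => [|m IH] //=; rewrite size_rcons IH. Qed.

Lemma nth_useq (R : comNzRingType) (h : nat -> R) m j : (j <= m)%N ->
  nth 0 (useq h m) j = uu h j.
Proof.
elim: m => [|m IH]; first by rewrite leqn0 => /eqP ->.
rewrite leq_eqVlt => /orP [/eqP -> //| ltjk].
by rewrite /= nth_rcons size_useq ltjk IH.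
Qed.

Lemma uuS (R : comNzRingType) (h : nat -> R) m :
  uu h m.+1 = - \sum_(j < m.+1) uu h j * h (m.+1 - j)%N.
Proof.
rewrite /uu /= nth_rcons size_useq ltnn eqxx; congr (- _).
by apply: eq_bigr => j _; rewrite nth_useq // -ltnS.
Qed.

Lemma uu_conv (R : comNzRingType) (h : nat -> R) (h0 : h 0%N = 1) m :
  \sum_(j < m.+1) uu h j * h (m - j)%N = (m == 0%N)%:R.
Proof.
case: m => [|m]; first by rewrite big_ord1 h0 mulr1.
by rewrite big_ord_recr /= subnn h0 mulr1 uuS addrN.
Qed.

Definition lowz {R : comNzRingType} (N : nat) (A : {poly R}) :=
  forall i, (i <= N)%N -> A`_i = 0.

Lemma lowzD (R : comNzRingType) N (A B : {poly R}) :
  lowz N A -> lowz N B -> lowz N (A + B).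
Proof. by move=> a b i Hi; rewrite coefD a // b // addr0. Qed.

Lemma lowzN (R : comNzRingType) N (A : {poly R}) :
  lowz N A -> lowz N (- A).
Proof. by move=> a i Hi; rewrite coefN a // oppr0. Qed.

Lemma lowzMl (R : comNzRingType) N (A B : {poly R}) :
  lowz N A -> lowz N (B * A).
Proof.
move=> a i Hi; rewrite coefM big1 // => j _; rewrite a ?mulr0 //.
exact: leq_trans (leq_subr _ _) Hi.
Qed.

Lemma lowzMr (R : comNzRingType) N (A B : {poly R}) :
  lowz N A -> lowz N (A * B).
Proof. by rewrite mulrC; apply: lowzMl. Qed.

Lemma coef_polyM (R : comNzRingType) N (a b : nat -> R) i : (i <= N)%N ->
  (\poly_(k < N.+1) a k * \poly_(k < N.+1) b k)`_i =
  \sum_(j < i.+1) a j * b (i - j)%N.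
Proof.
move=> Hi; rewrite coefM; apply: eq_bigr => j _.
rewrite !coef_poly ifT; last by apply: leq_trans (ltn_ord j) _.
rewrite ifT //; rewrite ltnS; exact: leq_trans (leq_subr _ _) Hi.
Qed.

Lemma newton_uu (R : comNzRingType) (h p : nat -> R) (h0 : h 0%N = 1)
  (Hh : forall m, (m.+1)%:R * h m.+1 = \sum_(i < m.+1) p i.+1 * h (m - i)%N) m :
  (m.+1)%:R * uu h m.+1 = - \sum_(i < m.+1) p i.+1 * uu h (m - i)%N.
Proof.
pose N := m.+1.
pose pp i := if i is i'.+1 then p i else 0.
pose Hp := \poly_(i < N.+1) h i.
pose Up := \poly_(i < N.+1) uu h i.
pose Pp := \poly_(i < N.+1) pp i.
pose Wp := \poly_(i < N.+1) (i%:R * uu h i).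
pose Dp := \poly_(i < N.+1) (i%:R * h i).
have F1 : lowz N (Up * Hp - 1).
  move=> i Hi; rewrite coefB coef_polyM // uu_conv // coef1 subrr //.
have F2 : lowz N (Dp - Pp * Hp).
  move=> i Hi; rewrite coefB coef_polyM // coef_poly ltnS Hi.
  case: i Hi => [|i] Hi; first by rewrite big_ord1 /= subnn subrr.
  by rewrite big_ord_recl /= mul0r add0r Hh subrr.
have F3 : lowz N (Up * Dp + Wp * Hp).
  move=> i Hi; rewrite coefD !coef_polyM // -big_split /=.
  rewrite (eq_bigr (fun j : 'I_i.+1 => i%:R * (uu h j * h (i - j)%N))).
    by rewrite -mulr_sumr uu_conv //; case: i {Hi} => [|i]; rewrite ?mul0r ?mulr0.
  move=> j _; rewrite mulrCA -mulrA -mulrDl -natrD subnK //.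
  by rewrite -ltnS.
have E : Wp + Pp * Up = Wp * (- (Up * Hp - 1)) + Up * (Up * Dp + Wp * Hp)
   - Up * Up * (Dp - Pp * Hp) - Pp * Up * (Up * Hp - 1).
  by ring.
have F : lowz N (Wp + Pp * Up).
  rewrite E; apply: lowzD; last by apply: lowzN; apply: lowzMl.
  apply: lowzD; last by apply: lowzN; apply: lowzMl.
  by apply: lowzD; apply: lowzMl => //; apply: lowzN.
have := F N (leqnn _); rewrite coefD coef_polyM // coef_poly ltnS leqnn.
rewrite big_ord_recl /= mul0r add0r => /eqP; rewrite addr_eq0 => /eqP ->.
by congr (- _); apply: eq_bigr => i _; rewrite subSS.
Qed.

Lemma sign2 (R : comNzRingType) m : (-1) ^+ m * (-1) ^+ m = 1 :> R.
Proof. by rewrite -exprMn mulrNN mulr1 expr1n. Qed.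

Lemma det_prop (R : comNzRingType) m (A : 'M[R]_m) (i0 i1 : 'I_m) (c : R) :
  i0 != i1 -> (forall j, A i0 j = c * A i1 j) -> \det A = 0.
Proof.
move=> ne Hc.
pose B := \matrix_(i, j) (if i == i0 then A i1 j else A i j).
rewrite (@determinant_multilinear _ _ A B A i0 c 0).
- rewrite (@determinant_alternate _ _ B i0 i1) ?mulr0 ?mul0r ?addr0 //.
  by move=> j; rewrite !mxE eqxx eq_sym (negbTE ne).
- by apply/rowP => j; rewrite !mxE eqxx mul0r addr0 Hc.
- by apply/matrixP => i j; rewrite !mxE eq_sym (negbTE (neq_lift _ _)).
- by [].
Qed.

Lemma det_col (R : comNzRingType) (hz : int -> R) (h0 : hz 0 = 1)
  (hn : forall k, hz (Negz k) = 0) m (A : 'M[R]_m)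
  (HA : forall i j : 'I_m, A i j = hz (1 - (i : nat)%:Z + (j : nat)%:Z)) :
  \det A = (-1) ^+ m * uu (fun k => hz (Posz k)) m.
Proof.
have hneg : forall z : int, z < 0 -> hz z = 0 by case.
pose h k := hz (Posz k).
pose T : 'M[R]_(m.+1) := \matrix_(i, j) hz ((i : nat)%:Z - (j : nat)%:Z).
have dT : \det T = 1.
  rewrite det_trig; last first.
    by apply/is_trig_mxP => i j lij; rewrite mxE hneg // subr_lt0 ltz_nat.
  by rewrite big1 // => i _; rewrite mxE subrr.
pose ucol : 'cV[R]_(m.+1) := \col_i uu h i.
pose e0 : 'cV[R]_(m.+1) := \col_i ((i : nat) == 0%N)%:R.
have Tu : T *m ucol = e0.
  apply/colP => i; rewrite !mxE.
  rewrite -(@uu_conv _ h) //.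
  rewrite (big_ord_widen _ (fun j => uu h j * h (i - j)%N) (ltn_ord i)).
  rewrite [RHS]big_mkcond; apply: eq_bigr => j _; rewrite !mxE.
  case: ifP => lji.
    by rewrite subzn 1?mulrC // -ltnS.
  by rewrite hneg ?mul0r // subr_lt0 ltz_nat ltnNge -ltnS lji.
have uE : ucol = \adj T *m e0.
  by rewrite -Tu mulmxA mul_adj_mx dT mul1mx.
have := congr1 (fun M : 'cV[R]_(m.+1) => M ord_max 0) uE; rewrite !mxE big_ord_recl big1; last first.
  by move=> j _; rewrite !mxE /= mulr0.
rewrite !mxE /= mulr1 /cofactor add0n => ->.
rewrite addr0 /= mulrA sign2 mul1r -det_tr; congr (\det _).
apply/matrixP => i j; rewrite !mxE HA lift0 lift_max.
congr hz; rewrite -addn1 PoszD; ring.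
Qed.

Lemma uniq_seqs k n : uniq (seqs_upto k n).
Proof.
elim: k => [|k IH] //=; apply/andP; split.
  by apply/negP => /allpairsP [[x y] [_ _]].
apply: allpairs_uniq => //; first exact: iota_uniq.
by move=> [x1 y1] [x2 y2] _ _ /= [-> ->].
Qed.

Lemma mem_seqs k n l : (size l <= k)%N -> all (fun a => (0 < a <= n)%N) l ->
  l \in seqs_upto k n.
Proof.
elim: k l => [|k IH] [|a l] //= Hs /andP [Ha Hl].
rewrite inE; apply/orP; right; apply/allpairsP; exists (a, l) => /=.
by split => //; [rewrite mem_iota add1n ltnS | apply: IH].
Qed.

Lemma uniq_partitions n : uniq (partitions n).
Proof. exact/filter_uniq/uniq_seqs. Qed.

Definition rowp n : seq nat := if n is 0 then [::] else [:: n].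

Lemma rowp_mem n : rowp n \in partitions n.
Proof.
case: n => [|n] //; rewrite mem_filter; apply/andP; split.
  by rewrite /is_partition /= addn0 eqxx.
by apply: mem_seqs => //=; rewrite leqnn.
Qed.

Lemma path_nseq1 n : path geq 1%N (nseq n 1%N).
Proof. by elim: n => //= n ->. Qed.

Lemma col_mem n : nseq n 1%N \in partitions n.
Proof.
rewrite mem_filter /is_partition sumn_nseq mul1n eqxx all_nseq orbT andbT.
rewrite (_ : sorted _ _ = true); last by case: n => // n; exact: path_nseq1.
apply: mem_seqs; first by rewrite size_nseq.
by rewrite all_nseq; case: n => //.
Qed.

Lemma vanish_plus (K : fieldType) (Kchar0 : [pchar K] =i pred0) n l :
  l \in partitions n -> l != rowp n -> (schur (@miwa K) l)`_n = 0.
Proof.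
rewrite mem_filter => /andP [/and3P [So Po /eqP Su] _].
case: l So Po Su => [|a [|b l']] So Po Su.
- by move: Su => /= <-.
- by move: Po; rewrite -Su /= addn0; case: (a) => [|a'] //= _; rewrite eqxx.
move=> _.
move: So Po => /= /andP [ba _] /and3P [a0 b0 _].
rewrite /schur (@det_prop _ _ _ ord0 (Ordinal (isT : (1 < (size l').+2)%N)) ('X^(a - b + 1))) ?coef0 //.
move=> j; rewrite !mxE.
rewrite [X in hcomp _ X = _](_ : _ = Posz (a + j)); last by simpl; lia.
rewrite [X in _ = _ * hcomp _ X](_ : _ = Posz (b - 1 + j)); last by simpl; lia.
rewrite !hcomp_miwa // -exprD; congr ('X^ _); lia.
Qed.

Lemma vanish_minus (K : fieldType) (Kchar0 : [pchar K] =i pred0) n l :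
  l \in partitions n -> l != nseq n 1%N -> (schur (@neg_miwa K) l)`_n = 0.
Proof.
rewrite mem_filter => /andP [/and3P [So Po /eqP Su] _].
case: l So Po Su => [|a l'] So Po Su; first by move: Su => /= <-.
case: a So Po Su => [|[|a]] So Po Su; first by [].
  have A1 : all (pred1 1%N) (1%N :: l').
    have := order_path_min (fun x y z (h1 : (x <= y)%N) (h2 : (z <= x)%N) => leq_trans h2 h1) So.
    move=> G; move: Po => /= Po; elim: l' {So Su} Po G => //= c l' IH /andP [c0 Hl] /andP [c1 Hl'].
    by rewrite eqn_leq c1 c0 IH.
  move/all_pred1P: A1 => E; rewrite E sumn_nseq mul1n in Su.
  by rewrite -Su -E eqxx.
move=> _.
rewrite /schur (expand_det_row _ ord0) big1 ?coef0 // => j _.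
rewrite !mxE.
rewrite [X in hcomp _ X * _](_ : _ = Posz (a + j).+2); last by rewrite /= subr0 -PoszD !addSn.
by rewrite (@hcomp_neg K Kchar0 (a + j).+2) mul0r.
Qed.

Lemma schur_row_miwa (K : fieldType) (Kchar0 : [pchar K] =i pred0) n :
  (schur (@miwa K) (rowp n))`_n = 1.
Proof.
case: n => [|n]; first by rewrite /schur det_mx00 coef1.
rewrite /schur det_mx11 mxE.
rewrite [X in hcomp _ X](_ : _ = Posz n.+1); last by rewrite /= subr0 addr0.
by rewrite (@hcomp_miwa K Kchar0) coefXn eqxx.
Qed.

Lemma schur_row_t (K : fieldType) (t : nat -> {poly K}) n :
  schur t (rowp n) = hcomp t (Posz n).
Proof.
case: n => [|n]; first by rewrite /schur det_mx00.
rewrite /schur det_mx11 mxE.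
by rewrite [X in hcomp _ X](_ : _ = Posz n.+1); last by rewrite /= subr0 addr0.
Qed.

Definition Pr {K : fieldType} M (g : nat -> K) (beta sign : K) n :=
  \prod_(j < n) Gfun M g (sign * beta * j%:R).

Lemma rlam_row (K : fieldType) M (g : nat -> K) beta n :
  rlam M g beta (rowp n) = Pr M g beta 1 n.
Proof.
case: n => [|n]; first by rewrite /rlam /Pr !big_ord0.
rewrite /rlam /Pr big_ord1 /=; apply: eq_bigr => j _; congr Gfun.
simpl; ring.
Qed.

Lemma nth_col n (i : 'I_(size (nseq n 1%N))) : nth 0%N (nseq n 1%N) i = 1%N.
Proof.
have H : (i < n)%N by case: i => /= i; rewrite size_nseq.
by rewrite nth_nseq H.
Qed.

Lemma rlam_col (K : fieldType) M (g : nat -> K) beta n :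
  rlam M g beta (nseq n 1%N) = Pr M g beta (-1) n.
Proof.
rewrite /rlam /Pr.
rewrite (eq_bigr (fun i : 'I_(size (nseq n 1%N)) => Gfun M g (-1 * beta * (i : nat)%:R))).
  by rewrite size_nseq.
move=> i _; rewrite nth_col big_ord1.
congr Gfun; simpl; ring.
Qed.

Lemma schur_col_neg (K : fieldType) (Kchar0 : [pchar K] =i pred0) n :
  (schur (@neg_miwa K) (nseq n 1%N))`_n = (-1) ^+ n.
Proof.
rewrite /schur det_trig; last first.
  apply/is_trig_mxP => i j lij; rewrite mxE nth_col.
  rewrite [X in hcomp _ X](_ : _ = Posz (j - i - 1).+2); last by lia.
  by rewrite (@hcomp_neg K Kchar0).
rewrite (eq_bigr (fun _ => - 'X)); last first.
  move=> i _; rewrite mxE nth_col.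
  rewrite [X in hcomp _ X](_ : _ = Posz 1); last by lia.
  by rewrite (@hcomp_neg K Kchar0).
rewrite prodr_const card_ord size_nseq (exprNn ('X : {poly K})) -(rmorph_sign (@polyC K)).
by rewrite coefCM coefXn eqxx mulr1.
Qed.

Lemma schur_col_t (K : fieldType) (t : nat -> {poly K}) n :
  schur t (nseq n 1%N) = (-1) ^+ n * uu (fun k => hcomp t (Posz k)) n.
Proof.
rewrite /schur (@det_col _ (hcomp t)) //; first by rewrite size_nseq.
by move=> i j; rewrite mxE nth_col.
Qed.

Lemma tau_plus (K : fieldType) (Kchar0 : [pchar K] =i pred0) M (g : nat -> K) (beta gamma : K) L (s : nat -> K) n :
  tau_at M g beta gamma L s (@miwa K) n =
  gamma ^+ n * Pr M g beta 1 n * (hcomp (tsb beta L s) (Posz n))`_0.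
Proof.
rewrite /tau_at (bigD1_seq (rowp n)) ?rowp_mem ?uniq_partitions //= big1_seq ?addr0.
  by rewrite schur_row_miwa // schur_row_t rlam_row mulr1.
move=> l /andP [ne lin]; rewrite vanish_plus //; ring.
Qed.

Lemma tau_minus (K : fieldType) (Kchar0 : [pchar K] =i pred0) M (g : nat -> K) (beta gamma : K) L (s : nat -> K) n :
  tau_at M g beta gamma L s (@neg_miwa K) n =
  gamma ^+ n * Pr M g beta (-1) n *
    (uu (fun k => hcomp (tsb beta L s) (Posz k)) n)`_0.
Proof.
rewrite /tau_at (bigD1_seq (nseq n 1%N)) ?col_mem ?uniq_partitions //= big1_seq ?addr0.
  rewrite schur_col_neg // schur_col_t rlam_col -(rmorph_sign (@polyC K)) coefCM.
  by rewrite -[in LHS]mulrA (mulrA ((-1) ^+ n)) sign2 mul1r.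
move=> l /andP [ne lin]; rewrite vanish_minus //; ring.
Qed.

Lemma a_rec (K : fieldType) (Kchar0 : [pchar K] =i pred0) (beta : K) L (s : nat -> K) m :
  (m.+1)%:R * (hcomp (tsb beta L s) (Posz m.+1))`_0 =
  \sum_(i < m.+1) (i.+1)%:R * (beta^-1 * svec L s i.+1)
      * (hcomp (tsb beta L s) (Posz (m - i)))`_0.
Proof.
have := congr1 (fun p : {poly K} => p`_0) (@hcompS' K Kchar0 (tsb beta L s) m).
rewrite /= coefZ coef_sum => ->; apply: eq_bigr => i _.
by rewrite coef0M coefZ /tsb coefC /= mulrA.
Qed.

Lemma u_rec (K : fieldType) (Kchar0 : [pchar K] =i pred0) (beta : K) L (s : nat -> K) m :
  (m.+1)%:R * (uu (fun k => hcomp (tsb beta L s) (Posz k)) m.+1)`_0 =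
  - \sum_(i < m.+1) (i.+1)%:R * (beta^-1 * svec L s i.+1)
      * (uu (fun k => hcomp (tsb beta L s) (Posz k)) (m - i))`_0.
Proof.
have := @newton_uu _ (fun k => hcomp (tsb beta L s) (Posz k))
   (fun i => i%:R *: tsb beta L s i) erefl.
have Hh : forall m0 : nat, m0.+1%:R * hcomp (tsb beta L s) (Posz m0.+1) =
   \sum_(i < m0.+1) (i.+1%:R *: tsb beta L s i.+1) * hcomp (tsb beta L s) (Posz (m0 - i)).
  by move=> m0; rewrite mulr_natl -scaler_nat (@hcompS' K Kchar0).
move=> /(_ Hh m) E.
rewrite mulr_natl -coefMn -mulr_natl E.
rewrite coefN coef_sum; congr (- _); apply: eq_bigr => i _.
by rewrite coef0M coefZ /tsb coefC /= mulrA.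
Qed.

Lemma sum_reindex (K : fieldType) L (s f : nat -> K) m :
  \sum_(1 <= k < L.+1) (if (k <= m.+1)%N then s k * f k else 0) =
  \sum_(i < m.+1) svec L s i.+1 * f i.+1.
Proof.
pose F k := if (k <= m.+1)%N then svec L s k * f k else 0.
have E1 : \sum_(1 <= k < L.+1) (if (k <= m.+1)%N then s k * f k else 0) =
          \sum_(1 <= k < (L + m).+2) F k.
  rewrite (@big_cat_nat _ _ _ L.+1 1 (L + m).+2) //=; last by lia.
  have Z : \sum_(L.+1 <= i < (L + m).+2) F i = 0.
    rewrite big_nat_cond big1 // => k /andP [/andP [Lk _] _]; rewrite /F /svec.
    by rewrite (_ : (k <= L)%N = false) ?andbF ?mul0r ?if_same //; lia.
  rewrite Z addr0; apply: eq_big_nat => k /andP [k1 kL]; rewrite /F /svec.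
  have kL' : (k <= L)%N by rewrite -ltnS.
  by rewrite k1 /= kL'.
have E2 : \sum_(i < m.+1) svec L s i.+1 * f i.+1 =
          \sum_(1 <= k < (L + m).+2) F k.
  rewrite -(big_mkord xpredT (fun i => svec L s i.+1 * f i.+1)).
  rewrite (_ : \sum_(0 <= i < m.+1) svec L s i.+1 * f i.+1 =
               \sum_(1 <= k < m.+2) svec L s k * f k); last by rewrite big_add1.
  rewrite (@big_cat_nat _ _ _ m.+2 1 (L + m).+2) //=; last by lia.
  have Z2 : \sum_(m.+2 <= i < (L + m).+2) F i = 0.
    rewrite big_nat_cond big1 // => k /andP [/andP [Lk _] _]; rewrite /F.
    by rewrite (_ : (k <= m.+1)%N = false) //; lia.
  by rewrite Z2 addr0; apply: eq_big_nat => k /andP [k1 kL]; rewrite /F (_ : (k <= m.+1)%N = true) //; lia.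
by rewrite E1 E2.
Qed.

Lemma Rop_ext (K : fieldType) M g (beta gamma sign : K) (f1 f2 : nat -> K) :
  f1 =1 f2 -> Rop M g beta gamma sign f1 =1 Rop M g beta gamma sign f2.
Proof. by move=> E [|n] //=; rewrite E. Qed.

Lemma iter_ext (K : fieldType) M g (beta gamma sign : K) (f1 f2 : nat -> K) k :
  f1 =1 f2 -> iter k (Rop M g beta gamma sign) f1 =1 iter k (Rop M g beta gamma sign) f2.
Proof. by elim: k => [|k IH] //= E; apply: Rop_ext; apply: IH. Qed.

Lemma iter_R (K : fieldType) M g (beta gamma sign : K) (a : nat -> K) k n :
  iter k (Rop M g beta gamma sign) (fun m => gamma ^+ m * Pr M g beta sign m * a m) n
  = if (k <= n)%N then gamma ^+ n * Pr M g beta sign n * a (n - k)%N else 0.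
Proof.
elim: k n => [|k IH] n; first by rewrite subn0.
rewrite iterS; case: n => [|n] //=.
rewrite IH ltnS; case: ifP => _; last by rewrite mulr0.
rewrite subSS /Pr big_ord_recr /= exprS; ring.
Qed.

Theorem theorem6p1 (K : fieldType) (Kchar0 : [pchar K] =i pred0)
  (M : nat) (g : nat -> K) (beta gamma : K) (beta_neq0 : beta != 0)
  (L : nat) (s : nat -> K) :
  let Psip := tau_at M g beta gamma L s (@miwa K) in
  let Psim := tau_at M g beta gamma L s (@neg_miwa K) in
  (forall n : nat,
     beta * Dop Psip n - Sop L s (Rop M g beta gamma 1) Psip n = 0) /\
  (forall n : nat,
     beta * Dop Psim n + Sop L s (Rop M g beta gamma (-1)) Psim n = 0).
Proof.
move=> Psip Psim; split => n.
- pose a k := (hcomp (tsb beta L s) (Posz k))`_0.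
  have EP : Psip =1 (fun m => gamma ^+ m * Pr M g beta 1 m * a m).
    by move=> m; rewrite /Psip tau_plus.
  rewrite /Dop /Sop EP.
  rewrite (eq_bigr (fun k => gamma ^+ n * Pr M g beta 1 n *
      (if (k <= n)%N then s k * (k%:R * a (n - k)%N) else 0))); last first.
    move=> k _; rewrite (@iter_ext K M g beta gamma _ _ _ k EP) iter_R.
    by case: ifP => _; [ring | rewrite !mulr0].
  rewrite -mulr_sumr.
  case: n => [|m].
    rewrite big_nat_cond big1; first by rewrite !(mulr0, mul0r, subrr).
    by move=> k /andP [/andP [k1 _] _]; rewrite leqNgt k1.
  rewrite (@sum_reindex K L s (fun k => k%:R * a (m.+1 - k)%N)).
  have := @a_rec K Kchar0 beta L s m; rewrite -/(a m.+1) => Ha.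
  have -> : beta * ((m.+1)%:R * (gamma ^+ m.+1 * Pr M g beta 1 m.+1 * a m.+1))
     = gamma ^+ m.+1 * Pr M g beta 1 m.+1 * (beta * ((m.+1)%:R * a m.+1)) by ring.
  rewrite Ha mulr_sumr -mulrBr (_ : forall x y : K, x = y -> x - y = 0); first by rewrite mulr0.
    by move=> x y ->; rewrite subrr.
  apply: eq_bigr => i _; rewrite subSS -/(a (m - i)%N).
  by field.
- pose a k := (uu (fun k => hcomp (tsb beta L s) (Posz k)) k)`_0.
  have EP : Psim =1 (fun m => gamma ^+ m * Pr M g beta (-1) m * a m).
    by move=> m; rewrite /Psim tau_minus.
  rewrite /Dop /Sop EP.
  rewrite (eq_bigr (fun k => gamma ^+ n * Pr M g beta (-1) n *
      (if (k <= n)%N then s k * (k%:R * a (n - k)%N) else 0))); last first.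
    move=> k _; rewrite (@iter_ext K M g beta gamma _ _ _ k EP) iter_R.
    by case: ifP => _; [ring | rewrite !mulr0].
  rewrite -mulr_sumr.
  case: n => [|m].
    rewrite big_nat_cond big1; first by rewrite !(mulr0, mul0r, addr0).
    by move=> k /andP [/andP [k1 _] _]; rewrite leqNgt k1.
  rewrite (@sum_reindex K L s (fun k => k%:R * a (m.+1 - k)%N)).
  have := @u_rec K Kchar0 beta L s m; rewrite -/(a m.+1) => Ha.
  have -> : beta * ((m.+1)%:R * (gamma ^+ m.+1 * Pr M g beta (-1) m.+1 * a m.+1))
     = gamma ^+ m.+1 * Pr M g beta (-1) m.+1 * (beta * ((m.+1)%:R * a m.+1)) by ring.
  rewrite Ha mulrN mulr_sumr -mulrDr (_ : forall x y : K, x = y -> - x + y = 0); first by rewrite mulr0.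
    by move=> x y ->; rewrite addNr.
  apply: eq_bigr => i _; rewrite subSS -/(a (m - i)%N).
  by field.
Qed.
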